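(* Assume the penalty $g$ satisfies A1–A3. Then for every $X=[x_1,\dots,x_n]\in\mathbb{R}^{m\times n}$ and $D\in\mathbb{R}^{m\times d}$, the constants $L_X(D)$, $C_X(D)$ defined with the norm $\|\cdot\|=\|\cdot\|_{1\to2}$ (and $C=1$) satisfy $$L_X(D)\le\frac1n\sum_{i=1}^n\sqrt{2f_{x_i}(D)}\,\bar g(f_{x_i}(D)),\qquad C_X(D)\le\frac1{2n}\sum_{i=1}^n\big[\bar g(f_{x_i}(D))\big]^2.$$
   Context: A penalty is a function $g:\mathbb{R}^d\to\mathbb{R}\cup\{+\infty\}$, not identically $+\infty$. A1: $g\ge0$; A2: $g$ lower semi-continuous; A3: $g(\alpha)\to+\infty$ as $\|\alpha\|\to\infty$. $\bar g(t)=\sup\{\|\alpha\|_1:\ g(\alpha)\le t\}$ ($\sup\emptyset=0$). $\mathcal{L}_x(D,\alpha)=\tfrac12\|x-D\alpha\|_2^2+g(\alpha)$, $f_x(D)=\inf_\alpha\mathcal{L}_x(D,\alpha)$. $\|\Delta\|_{1\to2}=\max_j\|\delta_j\|_2$, with dual norm $\|U\|_\star=\sup_{\|\Delta\|_{1\to2}\le1}\langle U,\Delta\rangle_F$. For $\epsilon>0$, $\mathfrak{A}_\epsilon(X,D)=\{A=[\alpha_1,\dots,\alpha_n]:\ \mathcal{L}_{x_i}(D,\alpha_i)\le f_{x_i}(D)+\epsilon\ \forall i\}$; $L_X(D)=\inf_{\epsilon>0}\sup_{A\in\mathfrak{A}_\epsilon(X,D)}\frac1n\|(X-DA)A^\top\|_\star$,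 $C_X(D)=\inf_{\epsilon>0}\sup_{A\in\mathfrak{A}_\epsilon(X,D)}\frac1{2n}\sum_i\|\alpha_i\|_1^2$. *)

(* Defs.v *)
From Stdlib Require Import Reals ClassicalEpsilon.
From mathcomp Require Import all_boot.
Set Implicit Arguments. Unset Strict Implicit. Unset Printing Implicit Defensive.
Local Open Scope R_scope.

Inductive Rbar := Fin (r : R) | PInf | MInf.

Definition Rbar_le (x y : Rbar) : Prop :=
  match x, y with
  | MInf, _ => True | _, PInf => True
  | Fin a, Fin b => a <= b
  | _, _ => False end.

Definition Rbar_lt (x y : Rbar) : Prop :=
  match x, y with
  | MInf, MInf => False | MInf, _ => True
  | PInf, _ => False
  | Fin _, PInf => True
  | Fin a, Fin b => a < b
  | Fin _, MInf => False end.

Definition Rbar_opp (x : Rbar) : Rbar :=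
  match x with Fin r => Fin (- r) | PInf => MInf | MInf => PInf end.

Definition Rbar_plus_r (x : Rbar) (e : R) : Rbar :=
  match x with Fin r => Fin (r + e) | y => y end.

(* c * x, with the convention 0 * (+-oo) = 0 *)
Definition Rbar_scal (c : R) (x : Rbar) : Rbar :=
  match x with
  | Fin r => Fin (c * r)
  | PInf => if Rlt_dec 0 c then PInf else if Rlt_dec c 0 then MInf else Fin 0
  | MInf => if Rlt_dec 0 c then MInf else if Rlt_dec c 0 then PInf else Fin 0
  end.

(* supremum in the extended reals of a set of reals (sup of the empty set = -oo) *)
Definition sup_R (E : R -> Prop) : Rbar :=
  match excluded_middle_informative (exists x, E x) with
  | left ne =>
      match excluded_middle_informative (bound E) with
      | left b => Fin (proj1_sig (completeness E b ne))
      | right _ => PInf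
      end
  | right _ => MInf
  end.

Definition Rbar_sup (E : Rbar -> Prop) : Rbar :=
  if excluded_middle_informative (E PInf) then PInf
  else sup_R (fun r => E (Fin r)).

Definition Rbar_inf (E : Rbar -> Prop) : Rbar :=
  Rbar_opp (Rbar_sup (fun x => E (Rbar_opp x))).

Definition Vec (k : nat) := 'I_k -> R.
Definition Mat (a b : nat) := 'I_a -> 'I_b -> R.

Definition rsum (k : nat) (F : 'I_k -> R) : R := \big[Rplus/0]_(i < k) F i.

Definition norm2 k (v : Vec k) : R := sqrt (rsum (fun i => v i ^ 2)).
Definition norm1 k (v : Vec k) : R := rsum (fun i => Rabs (v i)).
Definition vsub k (u v : Vec k) : Vec k := fun i => u i - v i.

Definition col a b (M : Mat a b) (j : 'I_b) : Vec a := fun r => M r j.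

Definition mulmv m d (D : Mat m d) (al : Vec d) : Vec m :=
  fun r => rsum (fun j => D r j * al j).

Definition frob a b (U V : Mat a b) : R := rsum (fun r => rsum (fun j => U r j * V r j)).

Definition norm12 a b (M : Mat a b) : R := \big[Rmax/0]_(j < b) norm2 (col M j).

Definition dualnorm12 a b (U : Mat a b) : Rbar :=
  sup_R (fun s => exists Dl : Mat a b, norm12 Dl <= 1 /\ s = frob U Dl).

Definition is_penalty d (g : Vec d -> Rbar) : Prop :=
  (forall al, g al <> MInf) /\ (exists al r, g al = Fin r).

Definition penA1 d (g : Vec d -> Rbar) : Prop := forall al, Rbar_le (Fin 0) (g al).

Definition penA2 d (g : Vec d -> Rbar) : Prop :=
  forall (al : Vec d) (t : R), Rbar_lt (Fin t) (g al) ->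
    exists delta, 0 < delta /\
      forall be : Vec d, norm2 (vsub be al) < delta -> Rbar_lt (Fin t) (g be).

Definition penA3 d (g : Vec d -> Rbar) : Prop :=
  forall M : R, exists rho : R, forall al : Vec d, rho < norm2 al -> Rbar_lt (Fin M) (g al).

(* gbar(t) = sup { ||alpha||_1 : g(alpha) <= t }, sup of the empty set = 0 *)
Definition gbar d (g : Vec d -> Rbar) (t : R) : Rbar :=
  let E := fun s => exists al, Rbar_le (g al) (Fin t) /\ s = norm1 al in
  if excluded_middle_informative (exists s, E s) then sup_R E else Fin 0.

Definition Lx m d (g : Vec d -> Rbar) (x : Vec m) (D : Mat m d) (al : Vec d) : Rbar :=
  match g al with
  | Fin r => Fin (/2 * norm2 (vsub x (mulmv D al)) ^ 2 + r)
  | PInf => PInf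
  | MInf => MInf
  end.

Definition fx m d (g : Vec d -> Rbar) (x : Vec m) (D : Mat m d) : Rbar :=
  Rbar_inf (fun v => exists al, v = Lx g x D al).

(* A = [alpha_1..alpha_n] in frak A_eps(X,D), stored as its family of columns *)
Definition inAeps m n d (g : Vec d -> Rbar) (eps : R) (X : Mat m n) (D : Mat m d)
    (A : 'I_n -> Vec d) : Prop :=
  forall i, Rbar_le (Lx g (col X i) D (A i)) (Rbar_plus_r (fx g (col X i) D) eps).

(* (X - D A) A^T, an m x d matrix *)
Definition residcorr m n d (X : Mat m n) (D : Mat m d) (A : 'I_n -> Vec d) : Mat m d :=
  fun r j => rsum (fun i => (X r i - mulmv D (A i) r) * A i j).

Definition LX m n d (g : Vec d -> Rbar) (X : Mat m n) (D : Mat m d) : Rbar :=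
  Rbar_inf (fun v => exists eps, 0 < eps /\
    v = Rbar_sup (fun w => exists A, inAeps g eps X D A /\
                      w = Rbar_scal (/ INR n) (dualnorm12 (residcorr X D A)))).

Definition CX m n d (g : Vec d -> Rbar) (X : Mat m n) (D : Mat m d) : Rbar :=
  Rbar_inf (fun v => exists eps, 0 < eps /\
    v = Rbar_sup (fun w => exists A, inAeps g eps X D A /\
                      w = Fin (/ (2 * INR n) * rsum (fun i => norm1 (A i) ^ 2)))).

(* Main.v *)
Require Import Defs.
From Stdlib Require Import Reals Lra Lia ClassicalEpsilon Classical.
From HB Require Import structures.
From mathcomp Require Import all_boot.
Set Implicit Arguments. Unset Strict Implicit. Unset Printing Implicit Defensive.
Local Open Scope R_scope.

HB.instance Definition _ := Monoid.isComLaw.Build R 0 Rplus (fun a b c => esym (Rplus_assoc a b c)) Rplus_comm Rplus_0_l.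

Section Big.
Variable I : Type.

Lemma bigR_le (r : seq I) (P : pred I) (F G : I -> R) :
  (forall i, P i -> F i <= G i) ->
  \big[Rplus/0]_(i <- r | P i) F i <= \big[Rplus/0]_(i <- r | P i) G i.
Proof. move=> H; apply: (big_ind2 Rle); [lra| move=> *; lra | exact H]. Qed.

Lemma bigR_ge0 (r : seq I) (P : pred I) (F : I -> R) :
  (forall i, P i -> 0 <= F i) -> 0 <= \big[Rplus/0]_(i <- r | P i) F i.
Proof. move=> H; apply: (big_ind (fun x => 0 <= x)); [lra| move=> *; lra | exact H]. Qed.

Lemma bigR_mulr (r : seq I) (P : pred I) (F : I -> R) c :
  \big[Rplus/0]_(i <- r | P i) (F i * c) = (\big[Rplus/0]_(i <- r | P i) F i) * c.
Proof.
symmetry; apply: (big_morph (fun x => x * c)); [move=> x y /=; ring | ring].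
Qed.

Lemma bigR_mull (r : seq I) (P : pred I) (F : I -> R) c :
  \big[Rplus/0]_(i <- r | P i) (c * F i) = c * (\big[Rplus/0]_(i <- r | P i) F i).
Proof.
symmetry; apply: (big_morph (fun x => c * x)); [move=> x y /=; ring | ring].
Qed.

Lemma bigR_add (r : seq I) (P : pred I) (F G : I -> R) :
  \big[Rplus/0]_(i <- r | P i) (F i + G i) =
  \big[Rplus/0]_(i <- r | P i) F i + \big[Rplus/0]_(i <- r | P i) G i.
Proof. exact: big_split. Qed.

Lemma bigR_mem (r : seq I) (F : I -> R) j :
  (forall i, 0 <= F i) -> List.In j r -> F j <= \big[Rplus/0]_(i <- r) F i.
Proof.
move=> H; elim: r => [|a r IH] //= [->|Hin]; rewrite big_cons.
- have : 0 <= \big[Rplus/0]_(i <- r) F i by apply: bigR_ge0 => i _; exact: H.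
  lra.
- have := IH Hin; have := H a; lra.
Qed.

Lemma bigRmin_le (r : seq I) (F : I -> R) j :
  List.In j r -> \big[Rmin/1]_(i <- r) F i <= F j.
Proof.
elim: r => [|a r IH] //= [->|Hin]; rewrite big_cons.
- apply: Rmin_l.
- apply: Rle_trans (Rmin_r _ _) (IH Hin).
Qed.

Lemma bigRmin_gt0 (r : seq I) (F : I -> R) :
  (forall i, 0 < F i) -> 0 < \big[Rmin/1]_(i <- r) F i.
Proof.
move=> H; apply: (big_ind (fun x => 0 < x)); [lra| |move=> i _; exact: H].
move=> x y hx hy; by apply: Rmin_pos.
Qed.

Lemma bigRmax_ge (r : seq I) (F : I -> R) j :
  List.In j r -> F j <= \big[Rmax/0]_(i <- r) F i.
Proof.
elim: r => [|a r IH] //= [->|Hin]; rewrite big_cons.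
- apply: Rmax_l.
- apply: Rle_trans (IH Hin) (Rmax_r _ _).
Qed.
End Big.

Lemma in_enum_ord k (i : 'I_k) : List.In i (index_enum 'I_k).
Proof.
have : i \in index_enum 'I_k by rewrite mem_index_enum.
elim: (index_enum 'I_k) => [|a r IH] //=; rewrite in_cons => /orP[/eqP->|/IH]; auto.
Qed.

Lemma rsum_le k (F G : 'I_k -> R) : (forall i, F i <= G i) -> rsum F <= rsum G.
Proof. move=> H; apply: bigR_le => i _; exact: H. Qed.
Lemma rsum_ge0 k (F : 'I_k -> R) : (forall i, 0 <= F i) -> 0 <= rsum F.
Proof. move=> H; apply: bigR_ge0 => i _; exact: H. Qed.
Lemma rsum_add k (F G : 'I_k -> R) : rsum (fun i => F i + G i) = rsum F + rsum G.
Proof. exact: bigR_add. Qed.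
Lemma rsum_mull k (F : 'I_k -> R) c : rsum (fun i => c * F i) = c * rsum F.
Proof. exact: bigR_mull. Qed.
Lemma rsum_mulr k (F : 'I_k -> R) c : rsum (fun i => F i * c) = rsum F * c.
Proof. exact: bigR_mulr. Qed.
Lemma rsum_ext k (F G : 'I_k -> R) : (forall i, F i = G i) -> rsum F = rsum G.
Proof. move=> H; apply: eq_bigr => i _; exact: H. Qed.
Lemma rsum_mem k (F : 'I_k -> R) j : (forall i, 0 <= F i) -> F j <= rsum F.
Proof. move=> H; apply: bigR_mem => //; exact: in_enum_ord. Qed.
Lemma rsum_const k c : rsum (fun _ : 'I_k => c) = INR k * c.
Proof.
rewrite /rsum big_const_ord; elim: k => [|k IH]; first (simpl; ring).
rewrite iterS IH S_INR; ring.
Qed.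

Lemma pt_ineq x y t : 0 < t -> x * y <= /2 * (t * x ^ 2) + /2 * (/ t * y ^ 2).
Proof.
move=> ht.
have E : /2 * (t * x ^ 2) + /2 * (/ t * y ^ 2) - x * y = / (2 * t) * (t * x - y) ^ 2
  by field; lra.
have : 0 <= / (2 * t) * (t * x - y) ^ 2.
  apply: Rmult_le_pos; [apply: Rlt_le; apply: Rinv_0_lt_compat; lra | apply: pow2_ge_0].
lra.
Qed.

Lemma norm2_ge0 k (a : Vec k) : 0 <= norm2 a.
Proof. exact: sqrt_pos. Qed.

Lemma norm2_sq k (a : Vec k) : norm2 a ^ 2 = rsum (fun i => a i ^ 2).
Proof.
rewrite /norm2 /= Rmult_1_r sqrt_sqrt //; apply: rsum_ge0 => i; apply: pow2_ge_0.
Qed.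

Lemma CS k (a b : Vec k) : rsum (fun i => a i * b i) <= norm2 a * norm2 b.
Proof.
set A := norm2 a; set B := norm2 b.
have hA : 0 <= A by exact: norm2_ge0.
have hB : 0 <= B by exact: norm2_ge0.
have key : forall t, 0 < t -> rsum (fun i => a i * b i) <= /2 * (t * A ^ 2) + /2 * (/t * B ^ 2).
  move=> t ht; rewrite /A /B !norm2_sq.
  apply: Rle_trans (rsum_le (fun i => pt_ineq (a i) (b i) ht)) _.
  rewrite rsum_add !rsum_mull; lra.
apply: Rle_plus_epsilon => eps he.
set e := Rmin 1 (eps / (A + B + 1)).
have he0 : 0 < e by apply: Rmin_pos; [lra | apply: Rdiv_lt_0_compat; lra].
have he1 : e <= 1 by apply: Rmin_l.
have he2 : e <= eps / (A + B + 1) by apply: Rmin_r.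
have he3 : e * (A + B + 1) <= eps.
  have : eps / (A + B + 1) * (A + B + 1) = eps by field; lra.
  have : e * (A + B + 1) <= eps / (A + B + 1) * (A + B + 1)
    by apply: Rmult_le_compat_r; lra.
  lra.
set t := (B + e) / (A + e).
have ht : 0 < t by apply: Rdiv_lt_0_compat; lra.
have h1 : t * A ^ 2 <= (B + e) * (A + e).
  have : t * (A + e) ^ 2 = (B + e) * (A + e) by rewrite /t; field; lra.
  have : t * A ^ 2 <= t * (A + e) ^ 2 by apply: Rmult_le_compat_l; nra.
  lra.
have h2 : / t * B ^ 2 <= (B + e) * (A + e).
  have : / t * (B + e) ^ 2 = (B + e) * (A + e) by rewrite /t; field; lra.
  have : / t * B ^ 2 <= / t * (B + e) ^ 2.
    apply: Rmult_le_compat_l; first by apply: Rlt_le; apply: Rinv_0_lt_compat.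
    nra.
  lra.
have := key t ht; nra.
Qed.

Lemma norm2_opp k (a : Vec k) : norm2 (fun i => - a i) = norm2 a.
Proof. rewrite /norm2; congr sqrt; apply: rsum_ext => i; ring. Qed.

Lemma CS_abs k (a b : Vec k) : Rabs (rsum (fun i => a i * b i)) <= norm2 a * norm2 b.
Proof.
apply: Rabs_le; split; last exact: CS.
have := CS (fun i => - a i) b; rewrite norm2_opp.
have -> : rsum (fun i => - a i * b i) = - rsum (fun i => a i * b i).
  have -> : - rsum (fun i => a i * b i) = -1 * rsum (fun i => a i * b i) by ring.
  rewrite -rsum_mull; apply: rsum_ext => i; ring.
lra.
Qed.

Lemma abs_le_norm2 k (a : Vec k) i : Rabs (a i) <= norm2 a.
Proof.
rewrite -(sqrt_pow2 (Rabs (a i))); last exact: Rabs_pos.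
rewrite /norm2; apply: sqrt_le_1_alt; rewrite pow2_abs.
apply: (@rsum_mem k (fun i => a i ^ 2) i) => j; exact: pow2_ge_0.
Qed.

Lemma norm1_ge0 k (a : Vec k) : 0 <= norm1 a.
Proof. apply: rsum_ge0 => i; exact: Rabs_pos. Qed.

Lemma norm2_le_norm1 k (a : Vec k) : norm2 a <= norm1 a.
Proof.
have H : forall r : seq 'I_k,
  \big[Rplus/0]_(i <- r) (a i ^ 2) <= (\big[Rplus/0]_(i <- r) Rabs (a i)) ^ 2 /\
  0 <= \big[Rplus/0]_(i <- r) Rabs (a i).
  elim=> [|x r [IH1 IH2]]; rewrite ?big_nil ?big_cons; first by simpl; lra.
  have := Rabs_pos (a x); rewrite -(pow2_abs (a x)); split; nra.
rewrite /norm2 -(sqrt_pow2 (norm1 a)); last exact: norm1_ge0.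
apply: sqrt_le_1_alt; exact: (H _).1.
Qed.

Lemma norm1_le_norm2 k (a : Vec k) : norm1 a <= norm2 a * norm2 (fun _ : 'I_k => 1).
Proof.
have := CS (fun i => Rabs (a i)) (fun _ => 1).
have -> : norm2 (fun i => Rabs (a i)) = norm2 a.
  rewrite /norm2; congr sqrt; apply: rsum_ext => i; exact: pow2_abs.
have -> : rsum (fun i => Rabs (a i) * 1) = norm1 a.
  apply: rsum_ext => i; ring.
done.
Qed.

Lemma norm1_tri k (a b : Vec k) : norm1 a <= norm1 b + norm1 (vsub a b).
Proof.
rewrite /norm1 -rsum_add; apply: rsum_le => i; rewrite /vsub.
have -> : a i = b i + (a i - b i) by ring.
have := Rabs_triang (b i) (a i - b i). 
have -> : b i + (a i - b i) - b i = a i - b i by ring. done.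
Qed.

Ltac emi_core := match goal with |- context [excluded_middle_informative ?P] =>
  destruct (excluded_middle_informative P) end.
Tactic Notation "emi" "=>" simple_intropattern(p) :=
  match goal with |- context [excluded_middle_informative ?P] =>
  destruct (excluded_middle_informative P) as p end.

Lemma sup_R_spec (E : R -> Prop) x : E x -> bound E ->
  exists s, sup_R E = Fin s /\ is_lub E s.
Proof.
move=> Ex hb; rewrite /sup_R.
destruct (excluded_middle_informative (exists x, E x)) as [ne|nne]; last by exfalso; apply: nne; exists x.
destruct (excluded_middle_informative (bound E)) as [b|nb]; last by [].
exists (proj1_sig (completeness E b ne)); split => //; exact: proj2_sig.
Qed.

Lemma sup_R_le (E : R -> Prop) b : (forall x, E x -> x <= b) -> Rbar_le (sup_R E) (Fin b).
Proof.
move=> H; case: (classic (exists x, E x)) => [[x Ex]|ne].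
- have [s [-> [_ hl]]] := sup_R_spec Ex (ex_intro _ b H).
  simpl; apply: hl; exact: H.
- rewrite /sup_R; emi => [e|ne2]; [by case: ne | done].
Qed.

Lemma Rbar_sup_le (E : Rbar -> Prop) b :
  (forall w, E w -> Rbar_le w (Fin b)) -> Rbar_le (Rbar_sup E) (Fin b).
Proof.
move=> H; rewrite /Rbar_sup; emi => [hp|hnp].
  by have := H _ hp.
apply: sup_R_le => x /H; done.
Qed.

Lemma Rbar_inf_le (E : Rbar -> Prop) b :
  (forall eta, 0 < eta -> exists v, E v /\ Rbar_le v (Fin (b + eta))) ->
  Rbar_le (Rbar_inf E) (Fin b).
Proof.
move=> H; rewrite /Rbar_inf /Rbar_sup.
emi => [hp|hnp]; first done.
have fin : forall eta, 0 < eta -> exists r, E (Rbar_opp (Fin (- r))) /\ r <= b + eta.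
  move=> eta he; have [v [Ev hv]] := H eta he.
  case: v Ev hv => [r| |] Ev hv.
  + exists r; split; last exact hv. by rewrite /= Ropp_involutive.
  + by [].
  + by exfalso; apply: hnp.
have [r0 [E0 _]] := fin 1 Rlt_0_1.
case: (classic (bound (fun r => E (Rbar_opp (Fin r))))) => [hb|nb].
- have [s [-> [hu hl]]] := sup_R_spec E0 hb.
  simpl; apply: Rle_plus_epsilon => eps he.
  have [r [Er hr]] := fin eps he.
  have := hu _ Er; lra.
- rewrite /sup_R; emi => [ne|nne]; last by exfalso; apply: nne; exists (- r0).
  by emi => [hb|nb2].
Qed.

Lemma Rbar_lt_le (v : Rbar) a b : Rbar_lt (Fin a) v -> Rbar_le v (Fin b) -> a < b.
Proof. case: v => [r| |] //=; lra. Qed.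

Lemma Rbar_le_fin_trans (v : Rbar) a b : Rbar_le v (Fin a) -> a <= b -> Rbar_le v (Fin b).
Proof. case: v => [r| |] //=; lra. Qed.

Lemma fx_fin m d (g : Vec d -> Rbar) (x : Vec m) (D : Mat m d) :
  is_penalty g -> penA1 g -> exists f, fx g x D = Fin f /\ 0 <= f.
Proof.
move=> [hnm [al0 [r0 h0]]] hA1; rewrite /fx /Rbar_inf /Rbar_sup.
emi => [hp|hnp].
  exfalso; case: hp => al; rewrite /Lx; case E: (g al) => [r| |] //= _.
  exact: (hnm al E).
have ub : forall r, (exists al, Rbar_opp (Fin r) = Lx g x D al) -> r <= 0.
  move=> r [al]; rewrite /Lx; case E: (g al) => [r'| |] //=; try by have := hnm al E.
  move=> [hr]; have := hA1 al; rewrite E /= => h.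
  have := pow2_ge_0 (norm2 (vsub x (mulmv D al))); lra.
have E0 : exists al, Rbar_opp (Fin (- (/2 * norm2 (vsub x (mulmv D al0)) ^ 2 + r0)))
   = Lx g x D al.
  by exists al0; rewrite /Lx h0 /= Ropp_involutive.
have [s [-> [hu hl]]] := sup_R_spec E0 (ex_intro _ 0 ub).
exists (- s); split => //; have := hl 0 ub; lra.
Qed.

Lemma Lx_le m d (g : Vec d -> Rbar) (x : Vec m) (D : Mat m d) al t :
  is_penalty g -> penA1 g -> Rbar_le (Lx g x D al) (Fin t) ->
  exists r, g al = Fin r /\ 0 <= r /\ /2 * norm2 (vsub x (mulmv D al)) ^ 2 + r <= t.
Proof.
move=> [hnm _] hA1; rewrite /Lx; case E: (g al) => [r| |] //=; last by have := hnm al E.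
move=> h; exists r; split => //; split => //; have := hA1 al; by rewrite E.
Qed.

Lemma gbar_fin d (g : Vec d -> Rbar) t : penA3 g ->
  exists G, gbar g t = Fin G /\ 0 <= G /\
    (forall al, Rbar_le (g al) (Fin t) -> norm1 al <= G).
Proof.
move=> hA3.
have [B hB] : exists B, forall al, Rbar_le (g al) (Fin t) -> norm1 al <= B.
  have [rho Hr] := hA3 t.
  exists (Rmax rho 0 * norm2 (fun _ : 'I_d => 1)) => al hal.
  have h1 : norm2 al <= rho.
    apply: Rnot_lt_le => hlt; have := Rbar_lt_le (Hr al hlt) hal; lra.
  apply: Rle_trans (norm1_le_norm2 al) _.
  apply: Rmult_le_compat_r; first exact: norm2_ge0.
  apply: Rle_trans h1 (Rmax_l _ _).
rewrite /gbar; emi => [[s0 Es0]|nne].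
- have hb : bound (fun s => exists al, Rbar_le (g al) (Fin t) /\ s = norm1 al).
    by exists B => s [al [h ->]]; exact: hB.
  have [G [-> [hu hl]]] := sup_R_spec Es0 hb.
  exists G; split => //; split.
    case: (Es0) => al [_ e0]; apply: Rle_trans (norm1_ge0 al) _; rewrite -e0.
    exact: hu.
  move=> al hal; apply: hu; by exists al.
- exists 0; split => //; split; first lra.
  move=> al hal; exfalso; apply: nne; exists (norm1 al); by exists al.
Qed.

Lemma Rabs_bnd x rho : Rabs x <= rho -> - rho <= x <= rho.
Proof. move=> h; have := Rle_abs x; have := Rle_abs (- x); rewrite Rabs_Ropp; lra. Qed.

Lemma inv_small eps : 0 < eps -> exists N : nat, forall n : nat, (N <= n)%coq_nat -> / (INR n + 1) < eps.
Proof.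
move=> he; have [N [hN hpos]] := archimed_cor1 eps he; exists N => n hn.
have h0 : 0 < INR N by apply: lt_0_INR; exact: hpos.
have h1 : INR N <= INR n by apply: le_INR.
apply: Rle_lt_trans _ hN; apply: Rinv_le_contravar => //; lra.
Qed.

Lemma incr_ge (phi : nat -> nat) : (forall q, (phi q < phi (S q))%coq_nat) ->
  forall q, (q <= phi q)%coq_nat.
Proof. move=> H; elim=> [|q IH]; first lia. have := H q; lia. Qed.

Lemma incr_strict (phi : nat -> nat) : (forall q, (phi q < phi (S q))%coq_nat) ->
  forall a b, (a < b)%coq_nat -> (phi a < phi b)%coq_nat.
Proof.
move=> H a; elim=> [|b IH] hab; first lia.
have := H b; case: (Nat.eq_dec a b) => [->|hne]; first lia.
have := IH ltac:(lia); lia.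
Qed.

Lemma Un_cv_sub (v : nat -> R) c (psi : nat -> nat) :
  Un_cv v c -> (forall q, (q <= psi q)%coq_nat) -> Un_cv (fun q => v (psi q)) c.
Proof.
move=> H hpsi eps he; have [N HN] := H eps he; exists N => n hn.
apply: HN; have := hpsi n; rewrite /ge in hn *; lia.
Qed.

Lemma BW1 (u : nat -> R) rho : (forall k, Rabs (u k) <= rho) ->
  exists (psi : nat -> nat) c, (forall q, (psi q < psi (S q))%coq_nat) /\
    Un_cv (fun q => u (psi q)) c.
Proof.
move=> hb.
have [c hc] := @Bolzano_Weierstrass u (fun x => - rho <= x <= rho) (compact_P3 _ _)
  (fun k => Rabs_bnd (hb k)).
have ex : forall N k : nat, exists p, (N <= p)%coq_nat /\ Rabs (u p - c) < / (INR k + 1).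
  move=> N k.
  have hp : 0 < / (INR k + 1).
    apply: Rinv_0_lt_compat; have := pos_INR k; lra.
  have [p [hp1 hp2]] := hc (disc c (mkposreal _ hp)) N
    (ex_intro _ (mkposreal _ hp) (fun y h => h)).
  by exists p.
pose ch N k := proj1_sig (constructive_indefinite_description _ (ex N k)).
have hch : forall N k, (N <= ch N k)%coq_nat /\ Rabs (u (ch N k) - c) < / (INR k + 1).
  move=> N k; exact: (proj2_sig (constructive_indefinite_description _ (ex N k))).
pose psi := fix f (q : nat) : nat := match q with 0 => ch 0%nat 0%nat | S q' => ch (S (f q')) (S q') end.
have hinc : forall q, (psi q < psi (S q))%coq_nat.
  move=> q; have := (hch (S (psi q)) (S q)).1; rewrite /=; lia.
have hcl : forall q, Rabs (u (psi q) - c) < / (INR q + 1).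
  case=> [|q]; [exact: (hch 0%nat 0%nat).2 | exact: (hch _ _).2].
exists psi, c; split => // eps he.
have [N HN] := inv_small he; exists N => n hn.
rewrite /Rdist; apply: Rlt_trans (hcl n) (HN n hn).
Qed.

Lemma BWk d (u : nat -> Vec d) rho : (forall k i, Rabs (u k i) <= rho) ->
  forall K, exists (phi : nat -> nat) (l : Vec d), (forall q, (phi q < phi (S q))%coq_nat) /\
    forall i : 'I_d, (i < K)%N -> Un_cv (fun q => u (phi q) i) (l i).
Proof.
move=> hb; elim=> [|K [phi [l [hphi hl]]]].
  exists id, (fun _ => 0); split => // q; lia.
case: (ltnP K d) => hK.
- pose i0 := Ordinal hK.
  have [psi [c [hpsi hc]]] := @BW1 (fun q => u (phi q) i0) rho (fun k => hb _ _).
  exists (fun q => phi (psi q)), (fun i : 'I_d => if (i < K)%N then l i else c); split.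
    move=> q; apply: incr_strict => //.
  move=> i; rewrite ltnS leq_eqVlt => /orP [/eqP hi|hi].
  + have -> : i = i0 by apply: val_inj.
    by rewrite /= ltnn.
  + rewrite hi; apply: (Un_cv_sub (v := fun q => u (phi q) i)); first exact: hl.
    exact: incr_ge.
- exists phi, l; split => // i hi; apply: hl; apply: leq_trans (ltn_ord i) hK.
Qed.

Lemma cv_norm1 d (w : nat -> Vec d) (l : Vec d) :
  (forall i, Un_cv (fun q => w q i) (l i)) ->
  forall eta, 0 < eta -> exists N, forall q, (N <= q)%coq_nat -> norm1 (vsub (w q) l) < eta.
Proof.
move=> H.
have gen : forall r : seq 'I_d, forall eta, 0 < eta -> exists N, forall q, (N <= q)%coq_nat ->
    \big[Rplus/0]_(i <- r) Rabs (w q i - l i) < eta.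
  elim=> [|j r IH] eta he.
    by exists 0%nat => q _; rewrite big_nil.
  have he2 : eta / 2 > 0 by lra.
  have [N1 H1] := H j _ he2; have [N2 H2] := IH _ he2.
  exists (Nat.max N1 N2) => q hq; rewrite big_cons.
  have := H1 q ltac:(rewrite /ge; lia); have := H2 q ltac:(lia); rewrite /Rdist; lra.
move=> eta he; have [N HN] := gen (index_enum 'I_d) eta he.
by exists N => q hq; apply: HN.
Qed.

Lemma rc d (g : Vec d -> Rbar) f G : penA2 g -> penA3 g ->
  (forall al, Rbar_le (g al) (Fin f) -> norm1 al <= G) ->
  forall del, 0 < del -> exists eps, 0 < eps /\
    forall al, Rbar_le (g al) (Fin (f + eps)) -> norm1 al <= G + del.
Proof.
move=> hA2 hA3 hG del hdel; apply: NNPP => Hn.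
have Hs : forall k : nat, exists al, Rbar_le (g al) (Fin (f + / (INR k + 1))) /\ G + del < norm1 al.
  move=> k; apply: NNPP => Hk; apply: Hn; exists (/ (INR k + 1)); split.
    apply: Rinv_0_lt_compat; have := pos_INR k; lra.
  move=> al hal; apply: Rnot_lt_le => hlt; apply: Hk; by exists al.
pose u k := proj1_sig (constructive_indefinite_description _ (Hs k)).
have hu : forall k, Rbar_le (g (u k)) (Fin (f + / (INR k + 1))) /\ G + del < norm1 (u k).
  move=> k; exact: (proj2_sig (constructive_indefinite_description _ (Hs k))).
have [rho Hrho] := hA3 (f + 1).
have hb : forall k i, Rabs (u k i) <= rho.
  move=> k i; apply: Rle_trans (abs_le_norm2 _ _) _.
  apply: Rnot_lt_le => hlt; have := Rbar_lt_le (Hrho _ hlt) (hu k).1.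
  have : / (INR k + 1) <= 1.
    rewrite -Rinv_1; apply: Rinv_le_contravar; [lra | have := pos_INR k; lra].
  lra.
have [phi [l [hphi hl]]] := BWk hb d.
have hl' : forall i, Un_cv (fun q => u (phi q) i) (l i) by move=> i; apply: hl.
have hcv := cv_norm1 hl'.
have h1 : G + del <= norm1 l.
  apply: Rle_plus_epsilon => eps he; have [N HN] := hcv eps he.
  have h : norm1 (vsub (u (phi N)) l) < eps := HN N (le_n _); have := norm1_tri (u (phi N)) l; have := (hu (phi N)).2; lra.
have h2 : Rbar_le (g l) (Fin f).
  apply: NNPP => hnot.
  have [t [ht ht2]] : exists t, f < t /\ Rbar_lt (Fin t) (g l).
    move: hnot; case: (g l) => [r| |] /= hnot.
    + exists ((f + r) / 2); split; lra.
    + exists (f + 1); split => //; lra.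
    + by exfalso; apply: hnot.
  have [delta [hdel0 Hd]] := hA2 l t ht2.
  have [N1 HN1] := hcv delta hdel0.
  have [N2 HN2] := inv_small (Rlt_Rminus _ _ ht).
  set q := Nat.max N1 N2.
  have hq : norm1 (vsub (u (phi q)) l) < delta := HN1 q ltac:(lia).
  have hlt := Hd (u (phi q)) (Rle_lt_trans _ _ _ (norm2_le_norm1 _) hq).
  have hi := HN2 (phi q) ltac:(have := incr_ge hphi q; lia).
  have := Rbar_lt_le hlt (hu (phi q)).1; lra.
have := hG l h2; lra.
Qed.

Lemma rsum_swap a b (F : 'I_a -> 'I_b -> R) :
  rsum (fun i => rsum (fun j => F i j)) = rsum (fun j => rsum (fun i => F i j)).
Proof. exact: exchange_big. Qed.

Lemma frob_bound m n d (X : Mat m n) (D : Mat m d) (A : 'I_n -> Vec d) (Dl : Mat m d) :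
  norm12 Dl <= 1 ->
  frob (residcorr X D A) Dl <=
  rsum (fun i => norm1 (A i) * norm2 (vsub (col X i) (mulmv D (A i)))).
Proof.
move=> hDl.
set res := fun i => vsub (col X i) (mulmv D (A i)).
have E1 : frob (residcorr X D A) Dl =
   rsum (fun i => rsum (fun j => A i j * rsum (fun r => res i r * Dl r j))).
  rewrite /frob /residcorr.
  transitivity (rsum (fun r => rsum (fun j => rsum (fun i => res i r * A i j * Dl r j)))).
    apply: rsum_ext => r; apply: rsum_ext => j; rewrite -rsum_mulr.
    apply: rsum_ext => i; rewrite /res /vsub /col; ring.
  transitivity (rsum (fun r => rsum (fun i => rsum (fun j => res i r * A i j * Dl r j)))).
    apply: rsum_ext => r; exact: rsum_swap.
  rewrite rsum_swap; apply: rsum_ext => i; rewrite rsum_swap.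
  apply: rsum_ext => j; rewrite -rsum_mull; apply: rsum_ext => r; ring.
rewrite E1; apply: rsum_le => i; rewrite /norm1 -rsum_mulr; apply: rsum_le => j.
set c := rsum (fun r => res i r * Dl r j).
have hc : Rabs c <= norm2 (res i).
  have h1 := CS_abs (res i) (col Dl j).
  have h2 : norm2 (col Dl j) <= 1.
    apply: Rle_trans hDl; rewrite /norm12.
    apply: (@bigRmax_ge _ _ (fun j => norm2 (col Dl j))); exact: in_enum_ord.
  have h3 := norm2_ge0 (res i); have h4 := norm2_ge0 (col Dl j).
  rewrite /c; apply: Rle_trans h1 _; nra.
apply: Rle_trans (Rle_abs _) _; rewrite Rabs_mult.
apply: Rmult_le_compat_l; [exact: Rabs_pos | exact: hc].
Qed.

Lemma norm12_0 a b : norm12 (fun (_ : 'I_a) (_ : 'I_b) => 0) <= 1.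
Proof.
rewrite /norm12; apply: (big_ind (fun x => x <= 1)); first lra.
  by move=> x y hx hy; apply: Rmax_lub.
move=> j _; rewrite /norm2 /col.
have -> : rsum (fun _ : 'I_a => 0 ^ 2) = 0.
  rewrite (rsum_ext (G := fun _ => 0)); last by move=> i; ring.
  rewrite rsum_const; ring.
rewrite sqrt_0; lra.
Qed.

Lemma dualnorm_bound a b (U : Mat a b) B :
  (forall Dl, norm12 Dl <= 1 -> frob U Dl <= B) -> exists s, dualnorm12 U = Fin s /\ s <= B.
Proof.
move=> H; rewrite /dualnorm12.
have E0 : (fun s => exists Dl : Mat a b, norm12 Dl <= 1 /\ s = frob U Dl)
            (frob U (fun _ _ => 0)) by exists (fun _ _ => 0); split => //; exact: norm12_0.
have hb : bound (fun s => exists Dl : Mat a b, norm12 Dl <= 1 /\ s = frob U Dl).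
  by exists B => s [Dl [h ->]]; exact: H.
have [s [-> [hu hl]]] := sup_R_spec E0 hb.
exists s; split => //; apply: hl => s' [Dl [h ->]]; exact: H.
Qed.

Lemma sqrt_subadd a b : 0 <= a -> 0 <= b -> sqrt (a + b) <= sqrt a + sqrt b.
Proof.
move=> ha hb.
have hsa := sqrt_pos a; have hsb := sqrt_pos b.
rewrite -(sqrt_pow2 (sqrt a + sqrt b)); last lra.
apply: sqrt_le_1_alt.
have -> : (sqrt a + sqrt b) ^ 2 = a + b + 2 * sqrt a * sqrt b.
  have := sqrt_sqrt a ha; have := sqrt_sqrt b hb; move=> e1 e2; nra.
nra.
Qed.

Lemma per_i m d (g : Vec d -> Rbar) (x : Vec m) (D : Mat m d) f G eta :
  is_penalty g -> penA1 g -> penA2 g -> penA3 g -> 0 <= f -> 0 <= G ->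
  (forall al, Rbar_le (g al) (Fin f) -> norm1 al <= G) -> 0 < eta ->
  exists e0, 0 < e0 /\ forall e, 0 < e -> e <= e0 -> forall al,
    Rbar_le (Lx g x D al) (Fin (f + e)) ->
    norm1 al * norm2 (vsub x (mulmv D al)) <= sqrt (2 * f) * G + eta /\
    norm1 al ^ 2 <= G ^ 2 + eta.
Proof.
move=> hpen hA1 hA2 hA3 hf hG hGb heta.
set S := sqrt (2 * f).
have hS : 0 <= S := sqrt_pos _.
set del := Rmin 1 (Rmin (eta / (2 * (S + 1))) (eta / (2 * G + 1))).
have hdel0 : 0 < del.
  apply: Rmin_glb_lt; first lra.
  apply: Rmin_glb_lt; apply: Rdiv_lt_0_compat; lra.
have hdel1 : del <= 1 by apply: Rmin_l.
have hdel2 : del * (2 * (S + 1)) <= eta.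
  have : del <= eta / (2 * (S + 1)) by apply: Rle_trans (Rmin_r _ _) (Rmin_l _ _).
  move=> h; have : eta / (2 * (S + 1)) * (2 * (S + 1)) = eta by field; lra.
  have : del * (2 * (S + 1)) <= eta / (2 * (S + 1)) * (2 * (S + 1)) by apply: Rmult_le_compat_r; lra.
  lra.
have hdel3 : del * (2 * G + 1) <= eta.
  have : del <= eta / (2 * G + 1) by apply: Rle_trans (Rmin_r _ _) (Rmin_r _ _).
  move=> h; have : eta / (2 * G + 1) * (2 * G + 1) = eta by field; lra.
  have : del * (2 * G + 1) <= eta / (2 * G + 1) * (2 * G + 1) by apply: Rmult_le_compat_r; lra.
  lra.
have [eps1 [heps1 Hrc]] := rc hA2 hA3 hGb hdel0.
set c := Rmin 1 (eta / (2 * (G + 1))).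
have hc0 : 0 < c by apply: Rmin_glb_lt; [lra | apply: Rdiv_lt_0_compat; lra].
have hc1 : c <= 1 by apply: Rmin_l.
have hc2 : c * (2 * (G + 1)) <= eta.
  have : c <= eta / (2 * (G + 1)) by apply: Rmin_r.
  move=> h; have : eta / (2 * (G + 1)) * (2 * (G + 1)) = eta by field; lra.
  have : c * (2 * (G + 1)) <= eta / (2 * (G + 1)) * (2 * (G + 1)) by apply: Rmult_le_compat_r; lra.
  lra.
exists (Rmin eps1 (c ^ 2 / 2)); split.
  apply: Rmin_glb_lt => //; nra.
move=> e he he0 al hal.
have he1 : e <= eps1 := Rle_trans _ _ _ he0 (Rmin_l _ _).
have he2 : e <= c ^ 2 / 2 := Rle_trans _ _ _ he0 (Rmin_r _ _).
have [r [hr [hr0 hle]]] := Lx_le hpen hA1 hal.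
set N := norm2 (vsub x (mulmv D al)).
have hN0 : 0 <= N := norm2_ge0 _.
rewrite -/N in hle.
have hn1 : norm1 al <= G + del.
  apply: Hrc; rewrite hr /=.
  have : 0 <= /2 * N ^ 2 by nra.
  lra.
have hn0 := norm1_ge0 al.
have hNb : N <= S + c.
  have h1 : N <= sqrt (2 * f + 2 * e).
    rewrite -(sqrt_pow2 N hN0); apply: sqrt_le_1_alt; lra.
  have h2 := @sqrt_subadd (2 * f) (2 * e) ltac:(lra) ltac:(lra).
  have h3 : sqrt (2 * e) <= c.
    rewrite -(sqrt_pow2 c); last lra.
    apply: sqrt_le_1_alt; lra.
  rewrite /S; lra.
split.
- apply: Rle_trans (Rmult_le_compat _ _ _ _ hn0 hN0 hn1 hNb) _.
  have : G * c <= eta / 2 by nra.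
  have : del * (S + c) <= eta / 2 by nra.
  nra.
- have : norm1 al ^ 2 <= (G + del) ^ 2 by nra.
  nra.
Qed.

Lemma inv_INR_ge0 n : 0 <= / INR n.
Proof.
case: n => [|n]; first by rewrite /= Rinv_0; lra.
apply: Rlt_le; apply: Rinv_0_lt_compat; apply: lt_0_INR; lia.
Qed.

Lemma inv_INR_mul_le1 n : / INR n * INR n <= 1.
Proof.
case: n => [|n]; first by rewrite /= Rinv_0; lra.
rewrite Rinv_l; first lra.
apply: not_0_INR; lia.
Qed.

Theorem mainTheorem6 (m n d : nat) (g : Vec d -> Rbar)
  (hpen : is_penalty g) (hA1 : penA1 g) (hA2 : penA2 g) (hA3 : penA3 g)
  (X : Mat m n) (D : Mat m d) :
  exists fv gv : 'I_n -> R,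
    (forall i, fx g (col X i) D = Fin (fv i) /\ gbar g (fv i) = Fin (gv i)) /\
    Rbar_le (LX g X D) (Fin (/ INR n * rsum (fun i => sqrt (2 * fv i) * gv i))) /\
    Rbar_le (CX g X D) (Fin (/ (2 * INR n) * rsum (fun i => gv i ^ 2))).
Proof.
pose fv i := match fx g (col X i) D with Fin r => r | _ => 0 end.
have hfv : forall i, fx g (col X i) D = Fin (fv i) /\ 0 <= fv i.
  move=> i; have [f [E h]] := fx_fin (col X i) D hpen hA1; by rewrite /fv E.
pose gv i := match gbar g (fv i) with Fin r => r | _ => 0 end.
have hgv : forall i, gbar g (fv i) = Fin (gv i) /\ 0 <= gv i /\
    (forall al, Rbar_le (g al) (Fin (fv i)) -> norm1 al <= gv i).
  move=> i; have [G [E [h1 h2]]] := gbar_fin (fv i) hA3; by rewrite /gv E.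
exists fv, gv; split; first by move=> i; split; [exact: (hfv i).1 | exact: (hgv i).1].
have common : forall eta, 0 < eta -> exists eps, 0 < eps /\ forall i al,
    Rbar_le (Lx g (col X i) D al) (Rbar_plus_r (fx g (col X i) D) eps) ->
    norm1 al * norm2 (vsub (col X i) (mulmv D al)) <= sqrt (2 * fv i) * gv i + eta /\
    norm1 al ^ 2 <= gv i ^ 2 + eta.
  move=> eta heta.
  have ex : forall i : 'I_n, exists e0, 0 < e0 /\ forall e, 0 < e -> e <= e0 -> forall al,
    Rbar_le (Lx g (col X i) D al) (Fin (fv i + e)) ->
    norm1 al * norm2 (vsub (col X i) (mulmv D al)) <= sqrt (2 * fv i) * gv i + eta /\
    norm1 al ^ 2 <= gv i ^ 2 + eta.
    move=> i; apply: per_i => //; [exact: (hfv i).2 | exact: (hgv i).2.1 | exact: (hgv i).2.2].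
  pose e0 i := proj1_sig (constructive_indefinite_description _ (ex i)).
  have he0 : forall i, 0 < e0 i /\ _ := fun i => proj2_sig (constructive_indefinite_description _ (ex i)).
  exists (\big[Rmin/1]_(i <- index_enum 'I_n) e0 i); split.
    by apply: bigRmin_gt0 => i; exact: (he0 i).1.
  move=> i al; rewrite (hfv i).1 /= => hal.
  apply: ((he0 i).2 _ _ _ al hal).
    by apply: bigRmin_gt0 => j; exact: (he0 j).1.
  apply: bigRmin_le; exact: in_enum_ord.
have hn0 := inv_INR_ge0 n; have hn1 := inv_INR_mul_le1 n.
split.
- apply: Rbar_inf_le => eta heta.
  have [eps [heps H]] := common eta heta.
  eexists; split; first by exists eps; split; [exact: heps | reflexivity].
  apply: Rbar_sup_le => w [A [hA ->]].
  have [s [-> hs]] := dualnorm_bound (frob_bound X D A).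
  rewrite /=.
  have hs2 : s <= rsum (fun i => sqrt (2 * fv i) * gv i) + INR n * eta.
    apply: Rle_trans hs _; rewrite -rsum_const -rsum_add; apply: rsum_le => i.
    exact: (H i (A i) (hA i)).1.
  have := Rmult_le_compat_l _ _ _ hn0 hs2.
  have : / INR n * (INR n * eta) <= eta by nra.
  lra.
- apply: Rbar_inf_le => eta heta.
  have [eps [heps H]] := common eta heta.
  eexists; split; first by exists eps; split; [exact: heps | reflexivity].
  apply: Rbar_sup_le => w [A [hA ->]].
  change (/ (2 * INR n) * rsum (fun i => norm1 (A i) ^ 2) <=
          / (2 * INR n) * rsum (fun i => gv i ^ 2) + eta).
  have hs2 : rsum (fun i => norm1 (A i) ^ 2) <= rsum (fun i => gv i ^ 2) + INR n * eta.
    rewrite -rsum_const -rsum_add; apply: rsum_le => i.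
    exact: (H i (A i) (hA i)).2.
  have h2n : / (2 * INR n) = / 2 * / INR n.
    case: n {X A hA H hs2 hn0 hn1 common hfv hgv fv gv} => [|n]; first by rewrite /= Rmult_0_r !Rinv_0; ring.
    rewrite Rinv_mult; ring.
  rewrite h2n.
  have := Rmult_le_compat_l _ _ _ hn0 hs2.
  have : / INR n * (INR n * eta) <= eta by nra.
  nra.
Qed.
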